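(* Let $2\le j<k$ be integers and $g_k(x,y)=(1+x+y)^k-ky-\bigl((1+x)^k-1\bigr)$. For $n$ a multiple of $k$ and integers $a,b\ge 0$ with $a+b\le n$, define $$E_{n,j,k}\!\left(\tfrac an,\tfrac bn\right)=\frac{\binom{n}{a,\,b,\,n-a-b}\,S_{n,j,k}(a,b)}{\binom{nj}{ja,\,jb,\,j(n-a-b)}},\qquad S_{n,j,k}(a,b)=\operatorname{coeff}\!\left(g_k(x,y)^{nj/k},\,x^{ja}y^{jb}\right).$$ Let $\alpha,\beta>0$ with $\alpha+\beta<1$, and let $(n,a_n,b_n)$ range over sequences with $n\to\infty$ through multiples of $k$ and $a_n/n\to\alpha$, $b_n/n\to\beta$. Then for all $x,y>0$, $$\limsup_{n\to\infty}\frac1n\ln E_{n,j,k}\!\left(\tfrac{a_n}{n},\tfrac{b_n}{n}\right)\le \frac{j}{k}\ln\frac{1+(1+x+y)^k-ky-(1+x)^k}{x^{k\alpha}y^{k\beta}}+(1-j)\,h(\alpha,\beta,1-\alpha-\beta),$$ where $h(p,q,r)=-p\ln p-q\ln q-r\ln r$.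
   Context: $E_{n,j,k}(a/n,b/n)$ is the average number of LM1 stopping sets in a random $(j,k)$-regular LDPC code of length $n$ with $a$ correct (unverified, correctly received) and $b$ incorrect variable nodes, the rest being verified; $g_k(x,y)$ enumerates the edge patterns at a single degree-$k$ check node that prevent LM1 decoding progress ($1$ marks a verified edge, $x$ a correct edge, $y$ an incorrect edge). $\operatorname{coeff}(f,x^py^q)$ denotes the coefficient of $x^py^q$ in the polynomial $f$. *)

(* Defs.v *)
From Stdlib Require Import Reals Arith.
Open Scope R_scope.

Definition multinom3 (a b c : nat) : R :=
  INR (fact (a + b + c)) / (INR (fact a) * INR (fact b) * INR (fact c)).

(* coefficient of x^s y^t in g_k(x,y) = (1+x+y)^k - k y - ((1+x)^k - 1) *)
Definition gcoef (k s t : nat) : R :=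
  (if (s + t <=? k)%nat then multinom3 s t (k - s - t) else 0)
  - (if (Nat.eqb s 0 && Nat.eqb t 1)%bool then INR k else 0)
  - (if (Nat.eqb t 0 && (1 <=? s)%nat && (s <=? k)%nat)%bool
     then INR (fact k) / (INR (fact s) * INR (fact (k - s))) else 0).

(* coefficient of x^p y^q in f^m, where f is the bivariate polynomial with
   coefficient c s t at x^s y^t (polynomial multiplication written out) *)
Fixpoint pcoef (c : nat -> nat -> R) (m p q : nat) : R :=
  match m with
  | O => if (Nat.eqb p 0 && Nat.eqb q 0)%bool then 1 else 0
  | S m' => sum_f_R0 (fun s =>
              sum_f_R0 (fun t => c s t * pcoef c m' (p - s) (q - t)) q) p
  end.

Definition Snjk (n j k a b : nat) : R :=
  pcoef (gcoef k) (n * j / k) (j * a) (j * b).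

Definition Enjk (n j k a b : nat) : R :=
  multinom3 a b (n - a - b) * Snjk n j k a b
  / multinom3 (j * a) (j * b) (j * (n - a - b)).

Definition hent (p q r : R) : R := - p * ln p - q * ln q - r * ln r.

(* Main.v *)
Require Import Defs.
From Stdlib Require Import Reals Arith Lra Lia Bool.
Open Scope R_scope.

Lemma sum_zero (f : nat -> R) (n : nat) :
  (forall t, (t <= n)%nat -> f t = 0) -> sum_f_R0 f n = 0.
Proof.
  intros Hf. induction n as [|n IH]; simpl.
  - apply Hf; lia.
  - rewrite IH by (intros; apply Hf; lia). rewrite Hf by lia. lra.
Qed.

Lemma sum_single (f : nat -> R) (i n : nat) :
  (i <= n)%nat -> (forall t, t <> i -> f t = 0) -> sum_f_R0 f n = f i.
Proof.
  intros Hin Hf. induction n as [|n IH].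
  - assert (i = 0%nat) by lia. subst. reflexivity.
  - simpl. destruct (Nat.eq_dec i (S n)) as [->|Hne].
    + rewrite sum_zero by (intros; apply Hf; lia). lra.
    + rewrite IH by lia. rewrite (Hf (S n)) by lia. lra.
Qed.

Lemma sum_ext_zero (f : nat -> R) (n m : nat) :
  (forall t, (n < t)%nat -> f t = 0) -> (n <= m)%nat -> sum_f_R0 f m = sum_f_R0 f n.
Proof.
  intros Hf Hnm. induction m as [|m IH].
  - assert (n = 0%nat) by lia. subst. reflexivity.
  - destruct (Nat.eq_dec n (S m)) as [->|Hne]; [reflexivity|].
    simpl. rewrite IH by lia. rewrite Hf by lia. lra.
Qed.

Lemma sum_le_trunc (f : nat -> R) (p k : nat) :
  (forall t, 0 <= f t) -> (forall t, (k < t)%nat -> f t = 0) ->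
  sum_f_R0 f p <= sum_f_R0 f k.
Proof.
  intros Hpos Hz. destruct (le_lt_dec p k) as [Hpk|Hkp].
  - clear Hz. induction k as [|k IH].
    + assert (p = 0%nat) by lia. subst. lra.
    + destruct (Nat.eq_dec p (S k)) as [->|Hne]; [lra|].
      simpl. specialize (IH ltac:(lia)). specialize (Hpos (S k)). lra.
  - rewrite (sum_ext_zero f k p); [lra|exact Hz|lia].
Qed.

Lemma term_le_sum (f : nat -> R) (i n : nat) :
  (forall t, 0 <= f t) -> (i <= n)%nat -> f i <= sum_f_R0 f n.
Proof.
  intros Hpos Hin. induction n as [|n IH].
  - assert (i = 0%nat) by lia. subst. simpl. lra.
  - simpl. destruct (Nat.eq_dec i (S n)) as [->|Hne].
    + pose proof (cond_pos_sum f n Hpos). lra.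
    + specialize (IH ltac:(lia)). specialize (Hpos (S n)). lra.
Qed.

Lemma sum_mult_r (f : nat -> R) n a :
  sum_f_R0 f n * a = sum_f_R0 (fun i => f i * a) n.
Proof. rewrite Rmult_comm, scal_sum. reflexivity. Qed.

Definition Gsum (c : nat -> nat -> R) (k : nat) (x y : R) : R :=
  sum_f_R0 (fun s => sum_f_R0 (fun t => c s t * x ^ s * y ^ t) k) k.

Lemma pcoef_nonneg (c : nat -> nat -> R) :
  (forall s t, 0 <= c s t) -> forall m p q, 0 <= pcoef c m p q.
Proof.
  intros Hc m. induction m as [|m IH]; intros p q; simpl.
  - destruct (Nat.eqb p 0 && Nat.eqb q 0)%bool; lra.
  - apply cond_pos_sum; intro s. apply cond_pos_sum; intro t.
    apply Rmult_le_pos; auto.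
Qed.

Lemma pcoef_bound (c : nat -> nat -> R) (k : nat) (x y : R) :
  0 < x -> 0 < y ->
  (forall s t, 0 <= c s t) ->
  (forall s t, (k < s)%nat -> c s t = 0) ->
  (forall s t, (k < t)%nat -> c s t = 0) ->
  forall m p q, pcoef c m p q * x ^ p * y ^ q <= Gsum c k x y ^ m.
Proof.
  intros hx hy Hc Hs Ht m. induction m as [|m IH]; intros p q.
  - simpl. destruct (Nat.eqb p 0) eqn:E1; destruct (Nat.eqb q 0) eqn:E2; simpl.
    + apply Nat.eqb_eq in E1, E2. subst. simpl. lra.
    + rewrite !Rmult_0_l; lra.
    + rewrite !Rmult_0_l; lra.
    + rewrite !Rmult_0_l; lra.
  - simpl pcoef.
    assert (HG: 0 <= Gsum c k x y ^ m).
    { eapply Rle_trans; [|apply (IH 0%nat 0%nat)]. simpl.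
      pose proof (pcoef_nonneg c Hc m 0 0). lra. }
    apply Rle_trans with
      (sum_f_R0 (fun s => sum_f_R0 (fun t => c s t * x ^ s * y ^ t * Gsum c k x y ^ m) q) p).
    + rewrite !sum_mult_r.
      apply sum_Rle; intros s Hs'.
      rewrite !sum_mult_r.
      apply sum_Rle; intros t Ht'.
      specialize (IH (p - s)%nat (q - t)%nat).
      replace (c s t * pcoef c m (p - s) (q - t) * x ^ p * y ^ q) with
        (c s t * x ^ s * y ^ t * (pcoef c m (p - s) (q - t) * x ^ (p - s) * y ^ (q - t))).
      * apply Rmult_le_compat_l; [|exact IH].
        apply Rmult_le_pos; [apply Rmult_le_pos|]; [apply Hc|apply pow_le; lra|apply pow_le; lra].
      * assert (E1: x ^ p = x ^ s * x ^ (p - s)) by (rewrite <- pow_add; f_equal; lia).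
        assert (E2: y ^ q = y ^ t * y ^ (q - t)) by (rewrite <- pow_add; f_equal; lia).
        rewrite E1, E2. ring.
    + simpl. unfold Gsum at 2. rewrite sum_mult_r.
      apply Rle_trans with (sum_f_R0 (fun s => sum_f_R0 (fun t => c s t * x ^ s * y ^ t * Gsum c k x y ^ m) k) p).
      * apply sum_Rle; intros s _.
        apply sum_le_trunc.
        -- intro t. apply Rmult_le_pos; [|exact HG].
           apply Rmult_le_pos; [apply Rmult_le_pos|]; [apply Hc|apply pow_le; lra|apply pow_le; lra].
        -- intros t Hkt. rewrite Ht by exact Hkt. ring.
      * apply Rle_trans with (sum_f_R0 (fun s => sum_f_R0 (fun t => c s t * x ^ s * y ^ t * Gsum c k x y ^ m) k) k).
        -- apply sum_le_trunc.
           ++ intro s. apply cond_pos_sum. intro t. apply Rmult_le_pos; [|exact HG].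
              apply Rmult_le_pos; [apply Rmult_le_pos|]; [apply Hc|apply pow_le; lra|apply pow_le; lra].
           ++ intros s Hks. rewrite (sum_single _ 0%nat) by (lia || (intros; rewrite Hs by exact Hks; ring)).
              rewrite Hs by exact Hks. ring.
        -- apply Req_le. apply sum_eq. intros s _. rewrite sum_mult_r. reflexivity.
Qed.

Lemma multinom3_pos a b c : 0 < multinom3 a b c.
Proof.
  unfold multinom3. pose proof (INR_fact_lt_0 (a+b+c)). pose proof (INR_fact_lt_0 a).
  pose proof (INR_fact_lt_0 b). pose proof (INR_fact_lt_0 c).
  apply Rdiv_lt_0_compat; [lra|]. repeat apply Rmult_lt_0_compat; lra.
Qed.

Lemma multinom3_binom s k : (s <= k)%nat ->
  multinom3 s 0 (k - s) = INR (fact k) / (INR (fact s) * INR (fact (k - s))).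
Proof.
  intros H. unfold multinom3. replace (s + 0 + (k - s))%nat with k by lia.
  simpl (fact 0). simpl (INR 1). rewrite Rmult_1_r. reflexivity.
Qed.

Lemma multinom3_01 k : (1 <= k)%nat -> multinom3 0 1 (k - 0 - 1) = INR k.
Proof.
  intros Hk. destruct k as [|k']; [lia|]. unfold multinom3.
  replace (0 + 1 + (S k' - 0 - 1))%nat with (S k') by lia.
  replace (S k' - 0 - 1)%nat with k' by lia.
  rewrite fact_simpl, mult_INR. simpl (fact 0). simpl (fact 1). simpl (INR 1).
  pose proof (INR_fact_lt_0 k'). field. lra.
Qed.

Lemma gcoef_nonneg k s t : (1 <= k)%nat -> 0 <= gcoef k s t.
Proof.
  intros Hk. unfold gcoef.
  destruct (Nat.eqb s 0) eqn:Es; destruct (Nat.eqb t 0) eqn:Et;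
  destruct (Nat.eqb t 1) eqn:Et1; destruct (1 <=? s)%nat eqn:E1s;
  destruct (s <=? k)%nat eqn:Esk; destruct (s + t <=? k)%nat eqn:Est; simpl;
  apply Nat.eqb_eq in Es || apply Nat.eqb_neq in Es;
  apply Nat.eqb_eq in Et || apply Nat.eqb_neq in Et;
  apply Nat.eqb_eq in Et1 || apply Nat.eqb_neq in Et1;
  apply Nat.leb_le in E1s || apply Nat.leb_gt in E1s;
  apply Nat.leb_le in Esk || apply Nat.leb_gt in Esk;
  apply Nat.leb_le in Est || apply Nat.leb_gt in Est;
  try (exfalso; lia);
  try (pose proof (multinom3_pos s t (k - s - t)); lra).
  - subst. rewrite multinom3_01 by lia. lra.
  - subst. replace (k - s - 0)%nat with (k - s)%nat by lia. rewrite multinom3_binom by lia. lra.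
Qed.

Lemma gcoef_zero_s k s t : (k < s)%nat -> gcoef k s t = 0.
Proof.
  intros H. unfold gcoef.
  replace (s + t <=? k)%nat with false by (symmetry; apply Nat.leb_gt; lia).
  replace (Nat.eqb s 0) with false by (symmetry; apply Nat.eqb_neq; lia).
  replace (s <=? k)%nat with false by (symmetry; apply Nat.leb_gt; lia).
  simpl. rewrite andb_false_r. lra.
Qed.

Lemma gcoef_zero_t k s t : (1 <= k)%nat -> (k < t)%nat -> gcoef k s t = 0.
Proof.
  intros H1 H. unfold gcoef.
  replace (s + t <=? k)%nat with false by (symmetry; apply Nat.leb_gt; lia).
  replace (Nat.eqb t 1) with false by (symmetry; apply Nat.eqb_neq; lia).
  replace (Nat.eqb t 0) with false by (symmetry; apply Nat.eqb_neq; lia).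
  simpl. rewrite andb_false_r. lra.
Qed.

Lemma gcoef_00 k : (1 <= k)%nat -> gcoef k 0 0 = 1.
Proof.
  intros H. unfold gcoef. simpl.
  unfold multinom3. simpl. replace (k - 0)%nat with k by lia.
  unfold multinom3. simpl. rewrite Nat.sub_0_r.
  pose proof (INR_fact_lt_0 k). field. lra.
Qed.

Lemma C_mult_multinom k s t : (s + t <= k)%nat ->
  C k s * C (k - s) t = multinom3 s t (k - s - t).
Proof.
  intros H. unfold C, multinom3. replace (s + t + (k - s - t))%nat with k by lia.
  pose proof (INR_fact_lt_0 k). pose proof (INR_fact_lt_0 s).
  pose proof (INR_fact_lt_0 t). pose proof (INR_fact_lt_0 (k - s)).
  pose proof (INR_fact_lt_0 (k - s - t)).
  field. repeat split; lra.
Qed.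

Lemma P1_inner k s x y : (s <= k)%nat ->
  sum_f_R0 (fun t => (if (s + t <=? k)%nat then multinom3 s t (k - s - t) else 0) * x ^ s * y ^ t) k
  = C k s * x ^ s * (1 + y) ^ (k - s).
Proof.
  intros Hs.
  rewrite (sum_ext_zero _ (k - s)).
  2:{ intros t Ht. replace (s + t <=? k)%nat with false by (symmetry; apply Nat.leb_gt; lia). ring. }
  2: lia.
  replace (1 + y) with (y + 1) by ring. rewrite binomial.
  rewrite scal_sum. apply sum_eq. intros t Ht.
  replace (s + t <=? k)%nat with true by (symmetry; apply Nat.leb_le; lia).
  rewrite <- C_mult_multinom by lia. rewrite pow1. ring.
Qed.

Lemma P1_sum k x y :
  sum_f_R0 (fun s => sum_f_R0 (fun t => (if (s + t <=? k)%nat then multinom3 s t (k - s - t) else 0) * x ^ s * y ^ t) k) k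
  = (1 + x + y) ^ k.
Proof.
  replace (1 + x + y) with (x + (1 + y)) by ring. rewrite binomial.
  apply sum_eq. intros s Hs. apply P1_inner. exact Hs.
Qed.

Lemma P2_sum k x y : (1 <= k)%nat ->
  sum_f_R0 (fun s => sum_f_R0 (fun t => (if (Nat.eqb s 0 && Nat.eqb t 1)%bool then INR k else 0) * x ^ s * y ^ t) k) k
  = INR k * y.
Proof.
  intros Hk. rewrite (sum_single _ 0%nat) by (lia || (intros s Hs; apply sum_zero; intros t _;
     replace (Nat.eqb s 0) with false by (symmetry; apply Nat.eqb_neq; lia); simpl; ring)).
  rewrite (sum_single _ 1%nat) by (lia || (intros t Ht;
     replace (Nat.eqb t 1) with false by (symmetry; apply Nat.eqb_neq; lia); simpl; ring)).
  simpl. ring.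
Qed.

Lemma P3_sum k x y :
  sum_f_R0 (fun s => sum_f_R0 (fun t => (if (Nat.eqb t 0 && (1 <=? s)%nat && (s <=? k)%nat)%bool
     then INR (fact k) / (INR (fact s) * INR (fact (k - s))) else 0) * x ^ s * y ^ t) k) k
  = (1 + x) ^ k - 1.
Proof.
  transitivity (sum_f_R0 (fun s => C k s * x ^ s * 1 ^ (k - s) - (if Nat.eqb s 0 then 1 else 0)) k).
  - apply sum_eq. intros s Hs.
    rewrite (sum_single _ 0%nat) by (lia || (intros t Ht;
       replace (Nat.eqb t 0) with false by (symmetry; apply Nat.eqb_neq; lia); simpl; ring)).
    simpl Nat.eqb. rewrite andb_true_l.
    replace (s <=? k)%nat with true by (symmetry; apply Nat.leb_le; lia).
    rewrite pow1. destruct s as [|s'].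
    + simpl. unfold C. rewrite Nat.sub_0_r. simpl. pose proof (INR_fact_lt_0 k). field. lra.
    + simpl (1 <=? S s')%nat. simpl (Nat.eqb (S s') 0). unfold C. simpl. ring.
  - rewrite minus_sum. rewrite <- binomial.
    rewrite (sum_single _ 0%nat) by (lia || (intros t Ht;
       replace (Nat.eqb t 0) with false by (symmetry; apply Nat.eqb_neq; lia); reflexivity)).
    simpl. replace (x + 1) with (1 + x) by ring. ring.
Qed.

Lemma Gsum_gcoef k x y : (1 <= k)%nat ->
  Gsum (gcoef k) k x y = 1 + (1 + x + y) ^ k - INR k * y - (1 + x) ^ k.
Proof.
  intros Hk. unfold Gsum, gcoef.
  transitivity (sum_f_R0 (fun s =>
     sum_f_R0 (fun t => (if (s + t <=? k)%nat then multinom3 s t (k - s - t) else 0) * x ^ s * y ^ t) k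
   - sum_f_R0 (fun t => (if (Nat.eqb s 0 && Nat.eqb t 1)%bool then INR k else 0) * x ^ s * y ^ t) k
   - sum_f_R0 (fun t => (if (Nat.eqb t 0 && (1 <=? s)%nat && (s <=? k)%nat)%bool
     then INR (fact k) / (INR (fact s) * INR (fact (k - s))) else 0) * x ^ s * y ^ t) k) k).
  - apply sum_eq. intros s _. rewrite <- !minus_sum. apply sum_eq. intros t _. ring.
  - rewrite !minus_sum. rewrite P1_sum, P2_sum, P3_sum by exact Hk. ring.
Qed.

Lemma ln_le_sub1 z : 0 < z -> ln z <= z - 1.
Proof. intros H. pose proof (exp_ineq1_le (ln z)). rewrite exp_ln in H0 by exact H. lra. Qed.

Lemma ln_diff_le u v : 0 < u -> 0 < v -> ln v - ln u <= (v - u) / u.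
Proof.
  intros Hu Hv. assert (E: ln (v / u) = ln v - ln u).
  { unfold Rdiv. rewrite ln_mult, ln_Rinv; try lra. apply Rinv_0_lt_compat; lra. }
  rewrite <- E. eapply Rle_trans; [apply ln_le_sub1; apply Rdiv_lt_0_compat; lra|].
  right. field. lra.
Qed.

Definition Ff (m : nat) : R := INR m * ln (INR m) - INR m.

Lemma key1 m : INR m * ln (INR m + 1) <= INR m * ln (INR m) + 1.
Proof.
  destruct m as [|m']. simpl. lra.
  assert (H: 0 < INR (S m')) by (apply lt_0_INR; lia).
  pose proof (ln_diff_le (INR (S m')) (INR (S m') + 1) H ltac:(lra)).
  replace ((INR (S m') + 1 - INR (S m')) / INR (S m')) with (/ INR (S m')) in H0 by (field; lra).
  apply Rmult_le_compat_l with (r := INR (S m')) in H0; [|lra].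
  rewrite Rmult_minus_distr_l, Rinv_r in H0 by lra. lra.
Qed.

Lemma ln_fact_S m : ln (INR (fact (S m))) = ln (INR m + 1) + ln (INR (fact m)).
Proof.
  rewrite fact_simpl, mult_INR, S_INR. apply ln_mult.
  pose proof (pos_INR m); lra. apply INR_fact_lt_0.
Qed.

Lemma lnfact_lower m : Ff m <= ln (INR (fact m)).
Proof.
  induction m as [|m IH].
  - unfold Ff. simpl. rewrite ln_1. lra.
  - rewrite ln_fact_S. unfold Ff in *. rewrite S_INR. pose proof (key1 m). lra.
Qed.

Lemma lnfact_upper0 m : ln (INR (fact m)) <= (INR m + 1) * ln (INR m + 1) - INR m.
Proof.
  induction m as [|m IH].
  - simpl. rewrite Rplus_0_l, ln_1. lra.
  - rewrite ln_fact_S. rewrite S_INR.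
    pose proof (pos_INR m).
    pose proof (ln_diff_le (INR m + 1) (INR m + 1 + 1) ltac:(lra) ltac:(lra)).
    replace ((INR m + 1 + 1 - (INR m + 1)) / (INR m + 1)) with (/ (INR m + 1)) in H0 by (field; lra).
    (* need (m+2) ln(m+1) + 1 <= (m+2) ln(m+2) *)
    pose proof (ln_diff_le (INR m + 1 + 1) (INR m + 1) ltac:(lra) ltac:(lra)).
    replace ((INR m + 1 - (INR m + 1 + 1)) / (INR m + 1 + 1)) with (- / (INR m + 1 + 1)) in H1 by (field; lra).
    assert (H2: (INR m + 1 + 1) * (ln (INR m + 1) - ln (INR m + 1 + 1)) <= -1).
    { apply Rmult_le_compat_l with (r := INR m + 1 + 1) in H1; [|lra].
      replace ((INR m + 1 + 1) * - / (INR m + 1 + 1)) with (-1) in H1 by (field; lra). lra. }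
    lra.
Qed.

Lemma lnfact_upper m : ln (INR (fact m)) <= Ff m + ln (INR m + 1) + 1.
Proof.
  pose proof (lnfact_upper0 m). pose proof (key1 m). unfold Ff. lra.
Qed.

Lemma ln_le_mono a b : 0 < a -> a <= b -> ln a <= ln b.
Proof. intros Ha [H|H]. left; apply ln_increasing; lra. rewrite H; lra. Qed.

Lemma xlnx_scale (j a : R) : 0 < j -> 0 <= a -> (j * a) * ln (j * a) = j * a * ln j + j * (a * ln a).
Proof.
  intros Hj [Ha|Ha].
  - rewrite ln_mult by lra. ring.
  - subst. rewrite Rmult_0_r. ring.
Qed.

Lemma xlnx_div (a n : R) : 0 <= a -> 0 < n -> (a / n) * ln (a / n) = (a * ln a - a * ln n) / n.
Proof.
  intros [Ha|Ha] Hn.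
  - assert (E: ln (a / n) = ln a - ln n).
    { unfold Rdiv. rewrite ln_mult, ln_Rinv; try lra. apply Rinv_0_lt_compat; lra. }
    rewrite E. field. lra.
  - subst. unfold Rdiv. rewrite !Rmult_0_l. field. lra.
Qed.

Lemma ln_multinom3 a b c : ln (multinom3 a b c) =
  ln (INR (fact (a + b + c))) - ln (INR (fact a)) - ln (INR (fact b)) - ln (INR (fact c)).
Proof.
  unfold multinom3. pose proof (INR_fact_lt_0 (a+b+c)). pose proof (INR_fact_lt_0 a).
  pose proof (INR_fact_lt_0 b). pose proof (INR_fact_lt_0 c).
  unfold Rdiv. rewrite ln_mult, ln_Rinv, !ln_mult; try lra;
  repeat apply Rmult_lt_0_compat; try lra. apply Rinv_0_lt_compat. repeat apply Rmult_lt_0_compat; lra.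
Qed.

Lemma hent_expand p q r : hent p q r = - (p * ln p) - (q * ln q) - (r * ln r).
Proof. unfold hent. ring. Qed.

Definition Gfun (k : nat) (x y : R) := 1 + (1 + x + y) ^ k - INR k * y - (1 + x) ^ k.

Definition Vseq (j n a b : nat) (x y : R) : R :=
  (1 - INR j) * hent (INR a / INR n) (INR b / INR n) (1 - INR a / INR n - INR b / INR n)
  - INR j * (INR a / INR n) * ln x - INR j * (INR b / INR n) * ln y
  + (4 * ln (INR j * INR n + 1) + 4) / INR n.

Lemma Gfun_ge1 k x y : (1 <= k)%nat -> 0 < x -> 0 < y -> 1 <= Gfun k x y.
Proof.
  intros Hk hx hy. unfold Gfun. rewrite <- Gsum_gcoef by exact Hk. unfold Gsum.
  assert (Hp: forall s t, 0 <= gcoef k s t * x ^ s * y ^ t).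
  { intros s t. apply Rmult_le_pos; [apply Rmult_le_pos|]; [apply gcoef_nonneg; lia|apply pow_le; lra|apply pow_le; lra]. }
  eapply Rle_trans; [|apply (term_le_sum _ 0%nat); [intro s; apply cond_pos_sum; intro t; apply Hp|lia]].
  eapply Rle_trans; [|apply (term_le_sum _ 0%nat); [intro t; apply Hp|lia]].
  simpl. rewrite gcoef_00 by exact Hk. lra.
Qed.

Lemma Snjk_nonneg n j k a b : (1 <= k)%nat -> 0 <= Snjk n j k a b.
Proof. intros Hk. apply pcoef_nonneg. intros; apply gcoef_nonneg; exact Hk. Qed.

Lemma Snjk_bound n j k a b x y : (1 <= k)%nat -> 0 < x -> 0 < y ->
  Snjk n j k a b * x ^ (j * a) * y ^ (j * b) <= Gfun k x y ^ (n * j / k).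
Proof.
  intros Hk hx hy. unfold Snjk, Gfun. rewrite <- Gsum_gcoef by exact Hk.
  apply pcoef_bound; auto.
  - intros; apply gcoef_nonneg; exact Hk.
  - intros; apply gcoef_zero_s; auto.
  - intros; apply gcoef_zero_t; auto.
Qed.

Lemma main_bound n j k a b x y : (1 <= j)%nat -> (1 <= k)%nat -> Nat.divide k n ->
  (a + b <= n)%nat -> (0 < n)%nat -> 0 < x -> 0 < y ->
  0 <= Enjk n j k a b /\
  (0 < Enjk n j k a b -> ln (Enjk n j k a b) / INR n <= INR j / INR k * ln (Gfun k x y) + Vseq j n a b x y).
Proof.
  intros hj hk hdiv hab hn hx hy.
  set (c := (n - a - b)%nat).
  assert (Hc: INR c = INR n - INR a - INR b).
  { unfold c. rewrite minus_INR by lia. rewrite minus_INR by lia. ring. }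
  assert (Habc: (a + b + c = n)%nat) by (unfold c; lia).
  assert (Hjabc: (j * a + j * b + j * c = j * n)%nat).
  { rewrite <- !Nat.mul_add_distr_l. rewrite Habc. reflexivity. }
  destruct hdiv as [q Hq].
  assert (Hm: (n * j / k = q * j)%nat).
  { rewrite Hq. replace (q * k * j)%nat with (q * j * k)%nat by ring. apply Nat.div_mul. lia. }
  assert (Hkpos: 0 < INR k) by (apply lt_0_INR; lia).
  assert (Hnpos: 0 < INR n) by (apply lt_0_INR; lia).
  assert (Hjpos: 0 < INR j) by (apply lt_0_INR; lia).
  assert (HmR: INR (q * j) = INR n * INR j / INR k).
  { rewrite mult_INR, Hq, mult_INR. field. lra. }
  pose proof (Snjk_nonneg n j k a b hk) as HS0.
  pose proof (multinom3_pos a b c) as HM1.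
  pose proof (multinom3_pos (j * a) (j * b) (j * c)) as HM2.
  assert (HE: Enjk n j k a b = multinom3 a b c * Snjk n j k a b / multinom3 (j * a) (j * b) (j * c))
    by reflexivity.
  rewrite HE. split.
  { apply Rmult_le_pos; [apply Rmult_le_pos; lra|left; apply Rinv_0_lt_compat; lra]. }
  intros HEpos.
  set (S := Snjk n j k a b) in *.
  assert (HSpos: 0 < S).
  { destruct HS0 as [H|H]; [exact H|]. rewrite <- H in HEpos. unfold Rdiv in HEpos.
    rewrite Rmult_0_r, Rmult_0_l in HEpos. lra. }
  pose proof (Gfun_ge1 k x y hk hx hy) as HG1.
  set (G := Gfun k x y) in *.
  pose proof (Snjk_bound n j k a b x y hk hx hy) as HSb. fold S G in HSb. rewrite Hm in HSb.
  assert (HlnS: ln S <= INR (q * j) * ln G - INR (j * a) * ln x - INR (j * b) * ln y).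
  { assert (Hpx: 0 < x ^ (j * a)) by (apply pow_lt; lra).
    assert (Hpy: 0 < y ^ (j * b)) by (apply pow_lt; lra).
    apply ln_le_mono in HSb; [|repeat apply Rmult_lt_0_compat; lra].
    rewrite !ln_mult, !ln_pow in HSb; try lra; try apply Rmult_lt_0_compat; try lra. }
  assert (HlnE: ln (multinom3 a b c * S / multinom3 (j * a) (j * b) (j * c)) =
     ln (multinom3 a b c) + ln S - ln (multinom3 (j * a) (j * b) (j * c))).
  { unfold Rdiv. rewrite ln_mult, ln_mult, ln_Rinv; try lra.
    apply Rmult_lt_0_compat; lra. apply Rinv_0_lt_compat; lra. }
  rewrite HlnE. clear HlnE HE HEpos.
  rewrite !ln_multinom3. rewrite Habc, Hjabc.
  pose proof (lnfact_upper n) as U1.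
  pose proof (lnfact_lower a) as L1. pose proof (lnfact_lower b) as L2. pose proof (lnfact_lower c) as L3.
  pose proof (lnfact_lower (j * n)) as L4.
  pose proof (lnfact_upper (j * a)) as U2. pose proof (lnfact_upper (j * b)) as U3.
  pose proof (lnfact_upper (j * c)) as U4.
  set (LJ := ln (INR j * INR n + 1)).
  assert (Ha0: 0 <= INR a) by apply pos_INR.
  assert (Hb0: 0 <= INR b) by apply pos_INR.
  assert (Hc0: 0 <= INR c) by apply pos_INR.
  assert (Hle: forall t, (t <= j * n)%nat -> ln (INR t + 1) <= LJ).
  { intros t Ht. unfold LJ. apply ln_le_mono. pose proof (pos_INR t); lra.
    rewrite <- mult_INR. apply le_INR in Ht. lra. }
  pose proof (Hle n ltac:(nia)) as E1.
  pose proof (Hle (j * a)%nat ltac:(nia)) as E2.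
  pose proof (Hle (j * b)%nat ltac:(nia)) as E3.
  pose proof (Hle (j * c)%nat ltac:(nia)) as E4.
  unfold Ff in *. rewrite !mult_INR in *.
  rewrite !xlnx_scale in L4, U2, U3, U4 by lra.
  assert (HV: INR n * Vseq j n a b x y = (1 - INR j) * (INR n * ln (INR n) - INR a * ln (INR a)
     - INR b * ln (INR b) - INR c * ln (INR c)) - INR j * INR a * ln x - INR j * INR b * ln y + 4 * LJ + 4).
  { unfold Vseq. rewrite hent_expand.
    replace (1 - INR a / INR n - INR b / INR n) with (INR c / INR n) by (rewrite Hc; field; lra).
    rewrite !xlnx_div by lra. fold LJ.
    replace (INR n * ln (INR n)) with ((INR a + INR b + INR c) * ln (INR n)) by (rewrite Hc; ring).
    field. lra. }
  assert (HmR': INR q * INR j = INR n * INR j / INR k) by exact HmR.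
  try rewrite mult_INR in HlnS.
  apply Rmult_le_reg_l with (INR n); [lra|].
  assert (Hdiv: forall z, INR n * (z / INR n) = z) by (intro; field; lra).
  rewrite Hdiv.
  rewrite Rmult_plus_distr_l, HV.
  replace (INR n * (INR j / INR k * ln G)) with (INR q * INR j * ln G) by (rewrite HmR'; field; lra).
  assert (Hcn: INR n = INR a + INR b + INR c) by lra.
  assert (Q1: INR j * INR n * ln (INR j) = INR j * INR a * ln (INR j) + INR j * INR b * ln (INR j) + INR j * INR c * ln (INR j))
    by (rewrite Hcn; ring).
  assert (Q2: INR j * INR n = INR j * INR a + INR j * INR b + INR j * INR c) by (rewrite Hcn; ring).
  lra.
Qed.

Lemma cv_const (c : R) : Un_cv (fun _ => c) c.
Proof. intros eps He. exists 0%nat. intros. unfold Rdist, Rminus. rewrite Rplus_opp_r, Rabs_R0. lra. Qed.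

Lemma cv_ext (u v : nat -> R) l l' : (forall i, u i = v i) -> l = l' -> Un_cv u l -> Un_cv v l'.
Proof. intros H -> Hu eps He. destruct (Hu eps He) as [N HN]. exists N. intros n Hn. rewrite <- H. auto. Qed.

Lemma cv_ln (u : nat -> R) l : 0 < l -> Un_cv u l -> Un_cv (fun i => ln (u i)) (ln l).
Proof.
  intros Hl Hu. apply continuity_seq; [|exact Hu].
  apply derivable_continuous_pt. exists (/ l). apply derivable_pt_lim_ln. exact Hl.
Qed.

Lemma cv_xlnx (u : nat -> R) l : 0 < l -> Un_cv u l -> Un_cv (fun i => - u i * ln (u i)) (- l * ln l).
Proof.
  intros Hl Hu. apply (CV_mult (fun i => - u i) (fun i => ln (u i))).
  - apply (cv_ext (fun i => 0 - u i) _ (0 - l)); [intro; ring|ring|].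
    apply CV_minus; [apply cv_const|exact Hu].
  - apply cv_ln; auto.
Qed.

Lemma realbound rj eps : 0 < rj -> 0 < eps ->
  exists M : R, forall n, M <= n -> 0 < n -> 4 * ln (rj * n + 1) + 4 < eps * n.
Proof.
  intros Hj He.
  set (T := 8 * rj / eps + 1).
  assert (HT0: 0 < T) by (unfold T; assert (0 < 8 * rj / eps) by (apply Rdiv_lt_0_compat; lra); lra).
  assert (HT: 4 * rj / T <= eps / 2).
  { apply Rmult_le_reg_r with T; [lra|]. unfold Rdiv at 1. rewrite Rmult_assoc, Rinv_l by lra.
    unfold T. replace (eps / 2 * (8 * rj / eps + 1)) with (4 * rj + eps / 2) by (field; lra). lra. }
  set (C0 := 4 * Rabs (ln T) + 4 / T + 1).
  exists (2 * C0 / eps). intros n Hn Hnpos.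
  assert (Hv: 0 < rj * n + 1) by nra.
  pose proof (ln_diff_le T (rj * n + 1) HT0 Hv) as Hd.
  assert (E1: 4 * ln (rj * n + 1) <= 4 * ln T + (4 * rj / T) * n + 4 / T - 4).
  { replace ((rj * n + 1 - T) / T) with (rj / T * n + 1 / T - 1) in Hd by (field; lra).
    replace (4 * rj / T * n) with (4 * (rj / T * n)) by (unfold Rdiv; ring).
    replace (4 / T) with (4 * (1 / T)) by (unfold Rdiv; ring). lra. }
  assert (E2: (4 * rj / T) * n <= eps / 2 * n) by (apply Rmult_le_compat_r; lra).
  assert (E3: 4 * ln T + 4 / T < C0) by (unfold C0; pose proof (Rle_abs (ln T)); lra).
  assert (E4: C0 <= eps / 2 * n).
  { apply Rmult_le_compat_l with (r := eps / 2) in Hn; [|lra].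
    replace (eps / 2 * (2 * C0 / eps)) with C0 in Hn by (field; lra). exact Hn. }
  lra.
Qed.

Lemma err_cv (N : nat -> nat) rj : 0 < rj ->
  (forall M : nat, exists I, forall i, (I <= i)%nat -> (M <= N i)%nat) ->
  Un_cv (fun i => (4 * ln (rj * INR (N i) + 1) + 4) / INR (N i)) 0.
Proof.
  intros Hj HN eps He.
  destruct (realbound rj eps Hj He) as [M HM].
  destruct (INR_unbounded (Rmax M 1)) as [M' HM'].
  destruct (HN M') as [I HI]. exists I. intros i Hi.
  specialize (HI i Hi). apply le_INR in HI.
  assert (Hn: 0 < INR (N i)) by (pose proof (Rmax_r M 1); lra).
  assert (HMn: M <= INR (N i)) by (pose proof (Rmax_l M 1); lra).
  specialize (HM _ HMn Hn).
  assert (Hl: 0 <= ln (rj * INR (N i) + 1)).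
  { rewrite <- ln_1. apply ln_le_mono; [lra|]. pose proof (pos_INR (N i)). nra. }
  unfold Rdist. rewrite Rminus_0_r. rewrite Rabs_right.
  - apply Rmult_lt_reg_r with (INR (N i)); [lra|]. unfold Rdiv. rewrite Rmult_assoc, Rinv_l by lra. lra.
  - apply Rle_ge. unfold Rdiv. apply Rmult_le_pos; [lra|left; apply Rinv_0_lt_compat; lra].
Qed.

Lemma V_cv (j : nat) (alpha beta : R) (ha : 0 < alpha) (hb : 0 < beta) (hab : alpha + beta < 1)
  (N A B : nat -> nat)
  (hNinf : forall M : nat, exists I, forall i, (I <= i)%nat -> (M <= N i)%nat)
  (hA : Un_cv (fun i => INR (A i) / INR (N i)) alpha)
  (hB : Un_cv (fun i => INR (B i) / INR (N i)) beta) (x y : R) (hj : (1 <= j)%nat) :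
  Un_cv (fun i => Vseq j (N i) (A i) (B i) x y)
    ((1 - INR j) * hent alpha beta (1 - alpha - beta) - INR j * alpha * ln x - INR j * beta * ln y).
Proof.
  set (pA := fun i => INR (A i) / INR (N i)) in *.
  set (pB := fun i => INR (B i) / INR (N i)) in *.
  assert (HC: Un_cv (fun i => 1 - pA i - pB i) (1 - alpha - beta)).
  { apply (CV_minus (fun i => 1 - pA i) pB). apply (CV_minus (fun _ => 1) pA). apply cv_const. exact hA. exact hB. }
  assert (Hh: Un_cv (fun i => hent (pA i) (pB i) (1 - pA i - pB i)) (hent alpha beta (1 - alpha - beta))).
  { apply (cv_ext (fun i => (- pA i * ln (pA i) + - pB i * ln (pB i)) + - (1 - pA i - pB i) * ln (1 - pA i - pB i)) _
      ((- alpha * ln alpha + - beta * ln beta) + - (1 - alpha - beta) * ln (1 - alpha - beta))).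
    - intro i. unfold hent. ring.
    - unfold hent. ring.
    - apply (CV_plus (fun i => - pA i * ln (pA i) + - pB i * ln (pB i)) (fun i => - (1 - pA i - pB i) * ln (1 - pA i - pB i))).
      + apply (CV_plus (fun i => - pA i * ln (pA i)) (fun i => - pB i * ln (pB i))); apply cv_xlnx; auto.
      + apply (cv_xlnx (fun i => 1 - pA i - pB i)); [lra|exact HC]. }
  assert (Hj: 0 < INR j) by (apply lt_0_INR; lia).
  pose proof (err_cv N (INR j) Hj hNinf) as Herr.
  apply (cv_ext (fun i => ((1 - INR j) * hent (pA i) (pB i) (1 - pA i - pB i) - (INR j * ln x) * pA i - (INR j * ln y) * pB i)
      + (4 * ln (INR j * INR (N i) + 1) + 4) / INR (N i)) _
      (((1 - INR j) * hent alpha beta (1 - alpha - beta) - (INR j * ln x) * alpha - (INR j * ln y) * beta) + 0)).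
  - intro i. unfold Vseq, pA, pB. ring.
  - ring.
  - apply (CV_plus (fun i => (1 - INR j) * hent (pA i) (pB i) (1 - pA i - pB i) - (INR j * ln x) * pA i - (INR j * ln y) * pB i)).
    2: exact Herr.
    apply (CV_minus (fun i => (1 - INR j) * hent (pA i) (pB i) (1 - pA i - pB i) - (INR j * ln x) * pA i)).
    apply (CV_minus (fun i => (1 - INR j) * hent (pA i) (pB i) (1 - pA i - pB i))).
    + apply (CV_mult (fun _ => 1 - INR j)); [apply cv_const|exact Hh].
    + apply (CV_mult (fun _ => INR j * ln x)); [apply cv_const|exact hA].
    + apply (CV_mult (fun _ => INR j * ln y)); [apply cv_const|exact hB].
Qed.

Theorem theorem6 (j k : nat) (hj : (2 <= j)%nat) (hjk : (j < k)%nat)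
  (alpha beta : R) (ha : 0 < alpha) (hb : 0 < beta) (hab : alpha + beta < 1)
  (N A B : nat -> nat)
  (hNk : forall i, Nat.divide k (N i))
  (hNinf : forall M : nat, exists I, forall i, (I <= i)%nat -> (M <= N i)%nat)
  (hAB : forall i, (A i + B i <= N i)%nat)
  (hA : Un_cv (fun i => INR (A i) / INR (N i)) alpha)
  (hB : Un_cv (fun i => INR (B i) / INR (N i)) beta)
  (x y : R) (hx : 0 < x) (hy : 0 < y) :
  let L := INR j / INR k *
             ln ((1 + (1 + x + y) ^ k - INR k * y - (1 + x) ^ k)
                 / (Rpower x (INR k * alpha) * Rpower y (INR k * beta)))
           + (1 - INR j) * hent alpha beta (1 - alpha - beta) in
  forall eps : R, 0 < eps -> exists I : nat, forall i, (I <= i)%nat ->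
    Enjk (N i) j k (A i) (B i) = 0 \/
    ln (Enjk (N i) j k (A i) (B i)) / INR (N i) <= L + eps.
Proof.
  intros L eps He.
  assert (hj1: (1 <= j)%nat) by lia. assert (hk1: (1 <= k)%nat) by lia.
  pose proof (V_cv j alpha beta ha hb hab N A B hNinf hA hB x y hj1) as HV.
  destruct (HV eps He) as [I1 HI1].
  destruct (hNinf 1%nat) as [I2 HI2].
  exists (Nat.max I1 I2). intros i Hi.
  specialize (HI1 i ltac:(lia)). specialize (HI2 i ltac:(lia)).
  destruct (main_bound (N i) j k (A i) (B i) x y hj1 hk1 (hNk i) (hAB i) ltac:(lia) hx hy) as [H0 H1].
  destruct H0 as [Hpos|Hz]; [right|left; auto].
  specialize (H1 Hpos).
  assert (HG: 1 <= Gfun k x y) by (apply Gfun_ge1; auto).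
  assert (HL: L = INR j / INR k * ln (Gfun k x y) +
      ((1 - INR j) * hent alpha beta (1 - alpha - beta) - INR j * alpha * ln x - INR j * beta * ln y)).
  { unfold L. fold (Gfun k x y).
    assert (Hk: 0 < INR k) by (apply lt_0_INR; lia).
    assert (P1: 0 < Rpower x (INR k * alpha)) by (unfold Rpower; apply exp_pos).
    assert (P2: 0 < Rpower y (INR k * beta)) by (unfold Rpower; apply exp_pos).
    unfold Rdiv at 2. rewrite ln_mult, ln_Rinv, ln_mult, !ln_Rpower; try lra.
    - field. lra.
    - apply Rmult_lt_0_compat; lra.
    - apply Rinv_0_lt_compat, Rmult_lt_0_compat; lra. }
  unfold Rdist in HI1. pose proof (Rle_abs (Vseq j (N i) (A i) (B i) x y -
      ((1 - INR j) * hent alpha beta (1 - alpha - beta) - INR j * alpha * ln x - INR j * beta * ln y))).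
  rewrite HL. lra.
Qed.
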